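(* Let $\Pi$ be an $\mathrm{LP}^{\mathrm{MLN}}$ program such that $\mathrm{SM}'[\Pi]$ is not empty. Then for every interpretation $I$, $P'_\Pi(I) = P_\Pi(I)$.
   Context: Fix a first-order signature $\sigma$ with no function constants of positive arity; Herbrand interpretations are identified with sets of ground atoms. A formula is negative if every occurrence of every atom is in the scope of negation. A rule has the form $A\leftarrow B\wedge N$ ($A$ a possibly empty disjunction of atoms, $B$ a conjunction of atoms, $N$ a negative formula), identified with $B\wedge N\rightarrow A$. For a ground program (finite set of rules) $\Pi$, the reduct $\Pi^I$ consists of $A\leftarrow B$ for all rules $A\leftarrow B\wedge N$ in $\Pi$ with $I\models N$; $I$ is a (deterministic) stable model of $\Pi$ if $I$ is a minimal Herbrand model of $\Pi^I$. An $\mathrm{LP}^{\mathrm{MLN}}$ program $\Pi$ is a finite set of weighted rules $w:R$, where $R$ is a rule and $w$ is a real number (soft rule) or the symbol $\alpha$ (hard rule); it is identified with its ground instance, each ground rule inheriting the weight of the rule it comes from. $\overline{\Pi}=\{R \mid w:R\in\Pi\}$; $\Pi_I$ is the set of $w:R\in\Pi$ with $I\models R$; $\Pi^{\rm hard}$ and $\Pi^{\rm soft}$ are the sets of hard and soft rules. $\mathrm{SM}[\Pi]=\{I\mid I \text{ is a stable model of } \overline{\Pi_I}\}$. With $\alpha$ treated as a real parameter, $W_\Pi(I)=\exp(\sum_{w:R\in\Pi_I} w)$ if $I\in\mathrm{SM}[\Pi]$ and $0$ otherwise, and $P_\Pi(I)=\lim_{\alpha\to\infty} W_\Pi(I)/\sum_{J\in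 \mathrm{SM}[\Pi]}W_\Pi(J)$. Further, $\mathrm{SM}'[\Pi]$ is the set of interpretations $I$ that are stable models of $\overline{\Pi_I}$ and satisfy $\overline{\Pi^{\rm hard}}$; $W'_\Pi(I)=\exp(\sum_{w:R\in(\Pi^{\rm soft})_I} w)$ if $I\in \mathrm{SM}'[\Pi]$ and $0$ otherwise; $P'_\Pi(I)=W'_\Pi(I)/\sum_{J\in\mathrm{SM}'[\Pi]}W'_\Pi(J)$. *)

(* Defs.v *)
From HB Require Import structures.
From mathcomp Require Import all_boot all_order all_algebra.
From mathcomp Require Import all_classical all_reals all_analysis.
Set Implicit Arguments. Unset Strict Implicit. Unset Printing Implicit Defensive.
Import Order.TTheory GRing.Theory Num.Theory.
Local Open Scope ring_scope.

Section LPMLN.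
Variable T : finType.   (* ground atoms (finite Herbrand base) *)

Inductive formula :=
| FAtom of T | FBot | FNot of formula
| FAnd of formula & formula | FOr of formula & formula | FImp of formula & formula.

Fixpoint fsat (I : {set T}) (f : formula) : bool :=
  match f with
  | FAtom a => a \in I
  | FBot => false
  | FNot g => ~~ fsat I g
  | FAnd g h => fsat I g && fsat I h
  | FOr g h => fsat I g || fsat I h
  | FImp g h => fsat I g ==> fsat I h
  end.

(* every occurrence of every atom is in the scope of negation *)
Fixpoint negative (f : formula) : bool :=
  match f with
  | FAtom _ => false
  | FBot => true
  | FNot _ => true
  | FAnd g h | FOr g h | FImp g h => negative g && negative h
  end.

(* a ground rule  A <- B /\ N : head = disjunction of atoms, pbody = conjunction
   of atoms, nbody = negative formula *)
Record rule := Rule {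
  head : seq T; pbody : seq T; nbody : formula; nbody_negative : negative nbody }.

Definition rsat (I : {set T}) (r : rule) : bool :=
  (all (fun a => a \in I) (pbody r) && fsat I (nbody r)) ==> has (fun a => a \in I) (head r).

(* positive rule A <- B as (head, body) *)
Definition psat (I : {set T}) (pr : seq T * seq T) : bool :=
  all (fun a => a \in I) pr.2 ==> has (fun a => a \in I) pr.1.

Definition pmodel (I : {set T}) (P : seq (seq T * seq T)) : bool := all (psat I) P.

Definition reduct (P : seq rule) (I : {set T}) : seq (seq T * seq T) :=
  [seq (head r, pbody r) | r <- P & fsat I (nbody r)].

Definition stable (P : seq rule) (I : {set T}) : bool :=
  pmodel I (reduct P I) &&
  [forall J : {set T}, (J \proper I) ==> ~~ pmodel J (reduct P I)].

Variable R : realType.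

Inductive weight := Soft of R | Hard.

Definition is_hard (w : weight) : bool := if w is Hard then true else false.

(* weight with alpha treated as the real parameter a *)
Definition wval (a : R) (w : weight) : R := if w is Soft r then r else a.
Definition soft_val (w : weight) : R := if w is Soft r then r else 0.

(* an LP^MLN program (its ground instance): finite list of weighted rules *)
Definition program := seq (weight * rule).

Definition Pbar (P : program) : seq rule := [seq wr.2 | wr <- P].
Definition Psat (P : program) (I : {set T}) : program := [seq wr <- P | rsat I wr.2].

Definition SM (P : program) (I : {set T}) : bool := stable (Pbar (Psat P I)) I.

Definition W (P : program) (a : R) (I : {set T}) : R :=
  if SM P I then expR (\sum_(wr <- Psat P I) wval a wr.1) else 0.

(* the ratio whose limit as alpha -> oo defines P_Pi(I) *)
Definition Pratio (P : program) (I : {set T}) (a : R) : R :=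
  W P a I / \sum_(J : {set T} | SM P J) W P a J.

Definition SM' (P : program) (I : {set T}) : bool :=
  SM P I && all (fun wr => is_hard wr.1 ==> rsat I wr.2) P.

Definition W' (P : program) (I : {set T}) : R :=
  if SM' P I then expR (\sum_(wr <- Psat P I | ~~ is_hard wr.1) soft_val wr.1) else 0.

Definition P' (P : program) (I : {set T}) : R :=
  W' P I / \sum_(J : {set T} | SM' P J) W' P J.

End LPMLN.

(* Main.v *)
Require Import Defs.
From HB Require Import structures.
From mathcomp Require Import all_boot all_order all_algebra.
From mathcomp Require Import all_classical all_reals all_analysis.
From mathcomp Require Import lra.
Import numFieldNormedType.Exports.
Import Order.TTheory GRing.Theory Num.Theory.
Local Open Scope ring_scope.
Local Open Scope classical_set_scope.

Lemma count_and_le (X : Type) (a b : pred X) (s : seq X) :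
  (count (fun x => a x && b x) s <= count a s)%N /\
  (count (fun x => a x && b x) s == count a s) = all (fun x => a x ==> b x) s.
Proof.
elim: s => [|x s [IH1 IH2]] //=.
case: (a x); case: (b x) => /=.
- by rewrite !add1n ltnS IH1 eqSS IH2.
- rewrite add1n add0n; split; first exact: (leq_trans IH1 (leqnSn _)).
  by apply/negbTE; rewrite neq_ltn ltnS IH1.
- by rewrite !add0n IH1 IH2.
- by rewrite !add0n IH1 IH2.
Qed.

Lemma cvg_powX (R : realType) (f : R -> R) (l : R) (k : nat) :
  f a @[a --> +oo] --> l -> (f a ^+ k) @[a --> +oo] --> l ^+ k.
Proof.
move=> hf; elim: k => [|k IH].
  under eq_cvg do rewrite expr0. by rewrite expr0; apply: cvg_cst.
under eq_cvg do rewrite exprS. rewrite exprS.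
exact: cvgM.
Qed.

Theorem proposition2 (T : finType) (R : realType) (P : program T R) :
  (exists I : {set T}, SM' P I) ->
  forall I : {set T}, Pratio P I a @[a --> +oo] --> P' P I.
Proof.
move=> [I0 HI0] I.
pose H := count (fun wr : weight R * rule T => is_hard wr.1) P.
pose hc J := count (fun wr : weight R * rule T => is_hard wr.1) (Psat P J).
pose sc J := \sum_(wr <- Psat P J | ~~ is_hard wr.1) soft_val wr.1.
have hcE J : hc J = count (fun wr : weight R * rule T => is_hard wr.1 && rsat J wr.2) P.
  by rewrite /hc /Psat count_filter; apply: eq_count => x /=; rewrite andbC.
have hle J : (hc J <= H)%N by rewrite hcE; case: (count_and_le _ (fun wr : weight R * rule T => is_hard wr.1) (fun wr => rsat J wr.2) P).
have heq J : (hc J == H) = all (fun wr : weight R * rule T => is_hard wr.1 ==> rsat J wr.2) P.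
  by rewrite hcE; case: (count_and_le _ (fun wr : weight R * rule T => is_hard wr.1) (fun wr => rsat J wr.2) P).
have sumE a J : \sum_(wr <- Psat P J) wval a wr.1 = (hc J)%:R * a + sc J.
  rewrite (bigID (fun wr : weight R * rule T => is_hard wr.1)) /=; congr (_ + _).
    rewrite (eq_bigr (fun _ => a)); last by case=> [[]].
    by rewrite big_const_seq iter_addr_0 mulr_natl.
  by apply: eq_bigr; case=> [[]].
pose g J a := if SM P J then expR (sc J) * expR (- a) ^+ (H - hc J) else 0.
pose L J := if SM P J then expR (sc J) * 0 ^+ (H - hc J) else 0.
have Wg a J : W P a J = expR (H%:R * a) * g J a.
  rewrite /W /g; case: (SM P J); last by rewrite mulr0.
  rewrite sumE mulrA -expRD -expRM_natl -expRD; congr expR.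
  rewrite natrB // mulrN mulrBl; lra.
have WL J : W' P J = L J.
  rewrite /W' /L /SM' -heq; case: (SM P J) => //=.
  case: eqP => [->|hne]; first by rewrite subnn expr0 mulr1.
  by rewrite expr0n /= subn_eq0 (negbTE (_ : ~~ (H <= hc J)%N)) ?mulr0 //;
     rewrite -ltnNge ltn_neqAle hle andbT; apply/eqP.
have ratio a : Pratio P I a = g I a / \sum_J g J a.
  rewrite /Pratio (_ : \sum_(J | SM P J) W P a J = \sum_J W P a J); last first.
    by rewrite big_mkcond; apply: eq_bigr => J _; rewrite /W; case: (SM P J).
  rewrite Wg; under eq_bigr do rewrite Wg.
  by rewrite -mulr_sumr -mulf_div divff ?mul1r // expR_eq0.
have P'E : P' P I = L I / \sum_J L J.
  rewrite /P' (_ : \sum_(J | SM' P J) W' P J = \sum_J W' P J); last first.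
    by rewrite big_mkcond; apply: eq_bigr => J _; rewrite /W'; case: (SM' P J).
  by rewrite WL; under eq_bigr do rewrite WL.
have gL J : g J a @[a --> +oo] --> L J.
  rewrite /g /L; case: (SM P J); last exact: cvg_cst.
  apply: cvgM; first exact: cvg_cst.
  apply: cvg_powX; exact: cvgr_expR.
have L0 J : 0 <= L J by rewrite -WL /W'; case: (SM' P J) => //; exact: expR_ge0.
have Lpos : 0 < L I0 by rewrite -WL /W' HI0 expR_gt0.
have Sne : \sum_J L J != 0.
  rewrite gt_eqF // (bigD1 I0) //=; apply: ltr_pwDl => //.
  by apply: sumr_ge0 => J _.
rewrite P'E; under eq_cvg do rewrite ratio.
apply: cvgM; first exact: gL.
apply: cvgV => //.
apply: cvg_big.
- exact: pseudometric_normed_Zmodule.add_continuous.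
- by move=> J _; exact: gL.
Qed.
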